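(* Let $H$ be a Hermitian operator all of whose eigenvalues lie in $[0,1/2]$, let $L\ge4$ be an integer, $e_0$ real and $\Delta>1/\sqrt L$, set $\omega=\Delta-1/\sqrt L$, and assume $\omega<1$, $[e_0-\Delta/2,e_0+\Delta/2]\subseteq[0,1/2]$ and $(e_0\pm\omega/2)L\in\mathbb Z$. Then $\|Q(H)-\Pi_\Delta Q(H)\|\le\frac{2}{\sqrt L}$ (operator norm).
   Context: $\mathrm{sinc}_L(x)=\frac{\sin(\pi Lx)}{L\sin(\pi x)}$ (extended continuously to integers), and $Q(H)=\sum_{m=(e_0-\omega/2)L}^{(e_0+\omega/2)L}\mathrm{sinc}_L(H-m/L)^2$ (sum over consecutive integers). $\Pi_\Delta$ denotes the orthogonal projector onto the span of eigenvectors of $H$ with eigenvalue in $[e_0-\Delta/2,e_0+\Delta/2]$. *)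

(* Defs.v *)
From HB Require Import structures.
From mathcomp Require Import all_boot all_order all_algebra.
From mathcomp Require Import sesquilinear spectral.
From mathcomp Require Import complex.
From mathcomp Require Import classical_sets reals trigo.

Set Implicit Arguments.
Unset Strict Implicit.
Unset Printing Implicit Defensive.

Import Order.TTheory GRing.Theory Num.Theory.
Local Open Scope ring_scope.

(* sinc_L(x) = sin(pi L x) / (L sin(pi x)), extended continuously to the
   integers: at x = k in Z the limit is (-1)^((L-1) k). *)
Definition sincL {R : realType} (L : nat) (x : R) : R :=
  if x \is a Num.int then (-1) ^ ((L.-1)%:Z * Num.floor x)
  else sin (pi * L%:R * x) / (L%:R * sin (pi * x)).

(* Q(h) = sum_{m = a}^{b} sinc_L(h - m/L)^2, sum over the consecutive integers
   m = a, a+1, ..., b  (a = (e0 - w/2) L, b = (e0 + w/2) L, with a <= b). *)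
Definition Qfun {R : realType} (L : nat) (a b : int) (h : R) : R :=
  \sum_(k < (absz (b - a)).+1)
     (sincL L (h - (a + k%:Z)%:~R / L%:R)) ^+ 2.

(* Functional calculus f(H) of a normal (here Hermitian) matrix H, via the
   unitary diagonalisation H = P^-1 diag(d) P given by mathcomp's spectral
   theorem (spectralmx / spectral_diag); eigenvalues of a Hermitian matrix are
   real, so f is applied to their real parts. *)
Definition fcalc {R : realType} (n : nat) (f : R -> R) (H : 'M[R[i]]_n)
  : 'M[R[i]]_n :=
  invmx (spectralmx H)
  *m diag_mx (map_mx (fun z : R[i] => (f (complex.Re z))%:C%C) (spectral_diag H))
  *m spectralmx H.

Definition specproj {R : realType} (n : nat) (e0 Delta : R) (H : 'M[R[i]]_n)
  : 'M[R[i]]_n :=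
  fcalc (fun x : R => if (e0 - Delta / 2 <= x <= e0 + Delta / 2) then 1 else 0) H.

Definition vnorm {R : realType} (n : nat) (v : 'cV[R[i]]_n) : R :=
  Num.sqrt (\sum_(i < n) (Normc.normc (v i 0)) ^+ 2).

Definition opnorm {R : realType} (n : nat) (A : 'M[R[i]]_n) : R :=
  sup [set vnorm (A *m v) | v in [set v : 'cV[R[i]]_n | vnorm v <= 1]]%classic.

(* Main.v *)
Require Import Defs.
From HB Require Import structures.
From mathcomp Require Import all_boot all_order all_algebra.
From mathcomp Require Import sesquilinear spectral.
From mathcomp Require Import complex.
From mathcomp Require Import reals trigo.
From mathcomp Require Import classical_sets boolp topology normedtype sequences.
From mathcomp Require Import ring lra zify.
Import Order.TTheory GRing.Theory Num.Theory numFieldNormedType.Exports.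
Local Open Scope ring_scope.

Section S.
Variable R : realType.

Lemma sin_coeff'_pair (x : R) d : 0 < x < 2 ->
  0 < sin_coeff' x (0 + d.*2)%N + sin_coeff' x (0 + d.*2.+1)%N.
Proof.
move=> /andP[x_gt0 x_lt2].
rewrite /sin_coeff' 2!exprzD_nat (exprSz _ d.*2) -[in (-1) ^ d.*2](muln2 d).
rewrite -(exprnP _ (d * 2)) (exprM (-1)) sqrr_sign 2!mulr1 -exprSzr.
rewrite !add0n !mul1r mulN1r -[d.*2.+1]addn1 doubleD -addSn exprD.
rewrite -(ffact_fact (leq_addl _ _)) addnK.
rewrite mulNr -!mulrA -mulrBr mulr_gt0 ?exprn_gt0 //.
set u := _.+1.
rewrite natrM invfM.
rewrite -[X in _ < X - _]mul1r !mulrA -mulrBl.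
apply: divr_gt0; last by rewrite ltr0n fact_gt0.
rewrite subr_gt0.
rewrite ltr_pdivrMr; last by rewrite ltr0n ffact_gt0 leq_addl.
rewrite mul1r (@lt_le_trans _ _ 4) //.
  by rewrite (_ : 4 = 2 * 2) ?(ltr_pM (ltW _) (ltW _)) //; lra.
rewrite -[4]/(4%:R) ler_nat /= !ffactnS ffactn0 muln1 /=.
by rewrite /u; lia.
Qed.

Lemma sin_lb (x : R) : 0 < x < 2 -> x - x ^+ 3 / 6 <= sin x.
Proof.
move=> hx.
have sinx := @cvg_sin_coeff' _ x.
rewrite -(cvg_lim (@Rhausdorff R) sinx).
have -> : x - x ^+ 3 / 6 = \sum_(0 <= i < 2) sin_coeff' x i.
  rewrite big_nat_recr //= big_nat_recr //= big_nil add0r /sin_coeff' /=.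
  rewrite expr0z expr1z !mul1r expr1 /= !mulN1r.
  by rewrite (_ : 3`!%:R = 6 :> R) // divr1 mulNr.
apply/ltW/lt_sum_lim_series; first by move/cvgP in sinx.
move=> d.
have := @sin_coeff'_pair x d.+1 hx.
by rewrite !add0n !doubleS add2n.
Qed.

Lemma sin_sq_lb (y : R) : 0 < y <= 2^-1 -> 2 * y ^+ 2 <= sin (pi * y) ^+ 2.
Proof.
move=> /andP[y0 y1].
have p2 := @pi_ge2 R; have pl := @pihalf_lt2 R; have p1 := @pihalf_ge1 R.
have ty : 2 * y <= pi * y by rewrite ler_pM2r.
have tpi : pi * y <= pi / 2.
  by rewrite ler_pM2l // (lt_le_trans _ p2).
have t0 : 0 < pi * y by rewrite mulr_gt0 // (lt_le_trans _ p2).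
case: (lerP (pi * y) 1) => ht.
  have hs := @sin_lb (pi * y).
  have h : pi * y - (pi * y) ^+ 3 / 6 <= sin (pi * y) by apply: hs; lra.
  have h2 : 5 / 3 * y <= sin (pi * y).
    apply: le_trans h.
    have : (pi * y) ^+ 3 <= pi * y.
      rewrite -[X in _ <= X]mulr1 exprSr expr2 -mulrA ler_pM2l //.
      by rewrite -expr2 expr_le1 //; lra.
    lra.
  have h3 : 0 <= 5/3 * y by lra.
  apply: (le_trans _ (lerXn2r 2 _ _ h2)); rewrite ?nnegrE //; last lra.
  rewrite exprMn; apply: ler_wpM2r; rewrite ?exprn_ge0 //; [lra|].
  by rewrite expr2; lra.
have h1 : sin 1 < sin (pi * y).
  rewrite ltr_sin // in_itv /=; apply/andP; split => //; lra.
have hs1 : 5 / 6 <= sin (1 : R).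
  have := @sin_lb 1; rewrite expr1n => h; have := h ltac:(lra); lra.
have hsq : (5/6) ^+ 2 <= sin (pi * y) ^+ 2.
  apply: lerXn2r; rewrite ?nnegrE; lra.
apply: le_trans hsq.
have : y ^+ 2 <= 2^-1 ^+ 2.
  by apply: lerXn2r; rewrite ?nnegrE; lra.
rewrite !expr2; lra.
Qed.

Lemma sincL_bound (L : nat) (z : R) : (0 < L)%N -> 0 < `|z| <= 2^-1 ->
  sincL L z ^+ 2 <= 1 / (2 * (L%:R * `|z|) ^+ 2).
Proof.
move=> L0 /andP[z0 z1].
have nz : z \is a Num.int = false.
  apply/negbTE/negP => /intrP [m hm].
  move: z0 z1; rewrite hm -intr_norm.
  rewrite ltr0z => h0 h2.
  have h1 : (1 <= `|m|)%R by move: h0; lia.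
  move: h1; rewrite -(ler_int R) => h1; lra.
have hS : 2 * `|z| ^+ 2 <= sin (pi * z) ^+ 2.
  have -> : sin (pi * z) ^+ 2 = sin (pi * `|z|) ^+ 2.
    case: (ger0P z) => hz //.
    by rewrite mulrN sinN sqrrN.
  by apply: sin_sq_lb; rewrite z0.
have L0' : (0 : R) < L%:R by rewrite ltr0n.
have hp : 0 < 2 * `|z| ^+ 2 by rewrite mulr_gt0 // exprn_gt0.
rewrite /sincL nz expr_div_n exprMn.
have hs1 : sin (pi * L%:R * z) ^+ 2 <= 1.
  have a := sin_le1 (pi * L%:R * z); have b := sin_geN1 (pi * L%:R * z).
  rewrite expr2; nra.
apply: (@le_trans _ _ (1 / (L%:R ^+ 2 * sin (pi * z) ^+ 2))).
  have hd : 0 <= (L%:R ^+ 2 * sin (pi * z) ^+ 2)^-1.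
    by rewrite invr_ge0 mulr_ge0 // ?sqr_ge0.
  by rewrite div1r -[X in _ <= X]mul1r ler_wpM2r.
have hS0 : 0 < sin (pi * z) ^+ 2 by apply: lt_le_trans hS.
move: hS0 hS; set S := sin (pi * z) ^+ 2 => hS0 hS.
have hL2 : (0:R) < L%:R ^+ 2 by rewrite exprn_gt0.
have p1 : 0 < L%:R ^+ 2 * S by apply: mulr_gt0.
have p2 : 0 < 2 * (L%:R * `|z|) ^+ 2 by rewrite exprMn mulrCA; apply: mulr_gt0.
rewrite !div1r lef_pV2 ?posrE //.
by rewrite exprMn mulrCA ler_pM2l.
Qed.

Lemma sum_tail (c : R) (N : nat) (F : nat -> R) : 1 <= c ->
  (forall k, (k < N)%N -> F k <= 1 / (2 * (c + k%:R) ^+ 2)) ->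
  \sum_(k < N) F k <= 1 / c.
Proof.
move=> c1 hF.
have key : forall M, \sum_(k < M) 1 / (c + k%:R) ^+ 2 <=
    1 / (c - 2^-1) - 1 / (c + M%:R - 2^-1).
  elim=> [|M IH]; first by rewrite big_ord0 addr0 subrr.
  rewrite big_ord_recr /=.
  set w := c + M%:R.
  have w1 : 1 <= w by rewrite /w; have := ler0n R M; lra.
  have e : 1 / (w - 2^-1) - 1 / (w + 2^-1) = 1 / (w ^+ 2 - 4^-1).
    field; apply/andP; split; [|apply/andP; split]; apply/eqP;
    rewrite ?expr2; nra.
  have : 1 / w ^+ 2 <= 1 / (w ^+ 2 - 4^-1).
    rewrite !div1r lef_pV2 ?posrE; try (rewrite ?expr2; nra).
  have -> : c + M.+1%:R - 2^-1 = w + 2^-1 by rewrite /w -natr1; lra.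
  move: IH; rewrite -/w; lra.
apply: (@le_trans _ _ (\sum_(k < N) 1 / (2 * (c + k%:R) ^+ 2))).
  by apply: ler_sum => k _; apply: hF.
have -> : \sum_(k < N) 1 / (2 * (c + k%:R) ^+ 2) =
     2^-1 * \sum_(k < N) 1 / (c + k%:R) ^+ 2.
  rewrite mulr_sumr; apply: eq_bigr => k _; rewrite !div1r invfM //.
apply: (@le_trans _ _ (2^-1 * (1 / (c - 2^-1)))).
  apply: ler_wpM2l; first lra.
  apply: le_trans (key N) _.
  have : 0 <= 1 / (c + N%:R - 2^-1).
    rewrite div1r invr_ge0; have := ler0n R N; lra.
  lra.
rewrite !div1r -invfM lef_pV2 ?posrE; lra.
Qed.

Lemma term_le (L : nat) (x m c : R) (k : nat) : (0 < L)%N ->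
  0 < `|x - m / L%:R| <= 2^-1 -> L%:R * `|x - m / L%:R| = c + k%:R ->
  sincL L (x - m / L%:R) ^+ 2 <= 1 / (2 * (c + k%:R) ^+ 2).
Proof. by move=> L0 h1 h2; rewrite -h2; apply: sincL_bound. Qed.

Lemma Q_bound (L : nat) (e0 Delta : R) (a b : int) (x : R) :
  (4 <= L)%N ->
  1 / Num.sqrt (L%:R) < Delta ->
  0 <= e0 - Delta / 2 -> e0 + Delta / 2 <= 2^-1 ->
  (e0 - (Delta - 1 / Num.sqrt (L%:R)) / 2) * L%:R = a%:~R ->
  (e0 + (Delta - 1 / Num.sqrt (L%:R)) / 2) * L%:R = b%:~R ->
  0 <= x <= 2^-1 -> ~~ (e0 - Delta / 2 <= x <= e0 + Delta / 2) ->
  Qfun L a b x <= 2 / Num.sqrt (L%:R).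
Proof.
move=> L4 hD hlo hhi ha hb /andP[x0 x1] hx.
have L0 : (0 < L)%N by apply: leq_trans L4.
move: hD ha hb.
set Lr : R := L%:R.
have Lr4 : 4 <= Lr by rewrite /Lr -[4]/(4%:R : R) ler_nat.
set s : R := Num.sqrt Lr.
move=> hD ha hb.
have s0 : 0 <= s by apply: sqrtr_ge0.
have ss : s * s = Lr by rewrite -expr2 sqr_sqrtr //; lra.
have s2 : 2 <= s by nra.
have is0 : 0 < 1 / s by rewrite div1r invr_gt0; lra.
set om := Delta - 1 / s.
have hs1 : 1 / s * Lr = s by rewrite -ss mulrA mul1r mulVf ?mul1r //; apply/eqP; lra.
set A : R := a%:~R.
set B : R := b%:~R.
have hBA : B - A = om * Lr.
  by rewrite /A /B -ha -hb /om -mulrBl; congr (_ * _); lra.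
have om0 : 0 < om by rewrite /om; lra.
set D := absz (b - a).
have hDR : (D%:R : R) = B - A.
  have h : (0 <= b - a)%R.
    by rewrite -(ler0z R) intrB -/A -/B hBA mulr_ge0 //; lra.
  by rewrite /D -[D%:R]/((D%:Z)%:~R) /D gez0_abs // intrB.
have Lr0 : 0 < Lr by lra.
rewrite /Qfun -/D.
have hterm : forall k : nat, ((a + k%:Z)%:~R : R) = A + k%:R.
  by move=> k; rewrite intrD.
have hdiv : forall y : R, Lr * (y / Lr) = y.
  by move=> y; rewrite mulrC -mulrA mulVf ?mulr1 //; apply/eqP; lra.
rewrite negb_and -!ltNge in hx.
case/orP: hx => hx.
-
  set c := A - Lr * x.
  have hc : s / 2 < c.
    have : Lr * (e0 - Delta / 2 - x) > 0 by apply: mulr_gt0 => //; lra.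
    have e : c = Lr * (e0 - Delta / 2 - x) + Lr * (1 / s) / 2.
      by rewrite /c /A -ha /om; ring.
    rewrite e (mulrC Lr (1 / s)) hs1; lra.
  apply: (le_trans (@sum_tail c _ (fun k : nat =>
     sincL L (x - (a + k%:Z)%:~R / L%:R) ^+ 2) _ _)).
  + have := s2; lra.
  + move=> k hk.
    rewrite hterm.
    apply: term_le => //.
    * have hk' : k%:R <= B - A by rewrite -hDR ler_nat -ltnS.
      have nk := ler0n R k.
      have e : x - (A + k%:R) / Lr = - ((c + k%:R) / Lr).
        by rewrite /c; field; apply/eqP; lra.
      rewrite e normrN ger0_norm; last by apply: divr_ge0; lra.
      apply/andP; split; first by apply: divr_gt0; lra.
      rewrite ler_pdivrMr //.
      have : B <= (e0 + Delta / 2) * Lr by rewrite /B -hb ler_pM2r //; lra.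
      have : x * Lr >= 0 by apply: mulr_ge0 => //; lra.
      have : (e0 + Delta / 2) * Lr <= 2^-1 * Lr by rewrite ler_pM2r.
      rewrite /c; nra.
    * have nk := ler0n R k.
      have e : x - (A + k%:R) / Lr = - ((c + k%:R) / Lr).
        by rewrite /c; field; apply/eqP; lra.
      rewrite e normrN ger0_norm; last by apply: divr_ge0; lra.
      by rewrite hdiv.
  + rewrite !div1r -[2 / s]invf_div lef_pV2 ?posrE; lra.
-
  set c := Lr * x - B.
  have hc : s / 2 < c.
    have : Lr * (x - (e0 + Delta / 2)) > 0 by apply: mulr_gt0 => //; lra.
    have e : c = Lr * (x - (e0 + Delta / 2)) + Lr * (1 / s) / 2.
      by rewrite /c /B -hb /om; ring.
    rewrite e (mulrC Lr (1 / s)) hs1; lra.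
  rewrite (reindex_inj rev_ord_inj) /=.
  apply: (le_trans (@sum_tail c _ (fun k : nat =>
     sincL L (x - (a + (D.+1 - k.+1)%N%:Z)%:~R / L%:R) ^+ 2) _ _)).
  + have := s2; lra.
  + move=> k hk.
    have hkD : (k <= D)%N by rewrite -ltnS.
    have e1 : ((a + (D.+1 - k.+1)%N%:Z)%:~R : R) = B - k%:R.
      by rewrite hterm subSS natrB // hDR; ring.
    rewrite e1.
    have hk' : k%:R <= B - A by rewrite -hDR ler_nat.
    have nk := ler0n R k.
    have e : x - (B - k%:R) / Lr = (c + k%:R) / Lr.
      by rewrite /c; field; apply/eqP; lra.
    have ge : 0 <= (c + k%:R) / Lr by apply: divr_ge0; lra.
    apply: term_le => //; rewrite e ger0_norm //; try by rewrite hdiv.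
    apply/andP; split; first by apply: divr_gt0; lra.
    rewrite ler_pdivrMr //.
    have : (e0 - Delta / 2) * Lr <= A by rewrite /A -ha ler_pM2r //; lra.
    have : 0 <= (e0 - Delta / 2) * Lr by apply: mulr_ge0 => //; lra.
    have : x * Lr <= 2^-1 * Lr by rewrite ler_pM2r.
    rewrite /c; nra.
  + rewrite !div1r -[2 / s]invf_div lef_pV2 ?posrE; lra.
Qed.
End S.

Section LA.
Local Open Scope sesquilinear_scope.
Variable R : realType.
Local Notation C := (R[i]).

Definition Sn {n} (v : 'cV[C]_n) : R := \sum_(i < n) (Normc.normc (v i 0)) ^+ 2.

Lemma normc_norm (z : C) : `|z| = (Normc.normc z)%:C%C.
Proof. by case: z => x y; rewrite normc_def. Qed.

Lemma SnC n (v : 'cV[C]_n) : (Sn v)%:C%C = (v ^t* *m v) 0 0.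
Proof.
rewrite /Sn rmorph_sum mxE; apply: eq_bigr => i _.
by rewrite rmorphXn /= -normc_norm normCK !mxE mulrC.
Qed.

Lemma Sn_unitary n (W : 'M[C]_n) v : W ^t* *m W = 1%:M -> Sn (W *m v) = Sn v.
Proof.
move=> hW; apply: complexI; rewrite !SnC.
by rewrite trmx_mul map_mxM mulmxA -[_ *m W^t* *m W]mulmxA hW mulmx1.
Qed.

Lemma normc_real (r : R) : Normc.normc (r%:C)%C = `|r|.
Proof. by rewrite /= expr0n addr0 sqrtr_sqr. Qed.


Lemma diag_eig n (H : 'M[C]_n) (j : 'I_n) : H \is normalmx ->
  eigenvalue H (spectral_diag H 0 j).
Proof.
move=> /orthomx_spectralP hH.
have Uu := spectral_unit H.
apply/eigenvalueP; exists (row j (spectralmx H)).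
  set U := spectralmx H; set d := spectral_diag H.
  have -> : row j U *m H = row j U *m (invmx U *m diag_mx d *m U).
    by rewrite -hH.
  rewrite -row_mul !mulmxA mulmxV // mul1mx.
  by apply/rowP => k; rewrite mul_diag_mx !mxE.
apply/negP => /eqP h.
have : row j (spectralmx H *m invmx (spectralmx H)) = row j 1%:M by rewrite mulmxV.
rewrite row_mul h mul0mx => /rowP /(_ j); rewrite !mxE eqxx /=.
by move/eqP; rewrite eq_sym oner_eq0.
Qed.

Lemma Sn0 n : Sn (0 : 'cV[C]_n) = 0.
Proof. by rewrite /Sn big1 // => i _; rewrite mxE /= expr0n addr0 sqrtr0 expr0n. Qed.

Lemma Sn_ge0 n (v : 'cV[C]_n) : 0 <= Sn v.
Proof. by apply: sumr_ge0 => i _; apply: sqr_ge0. Qed.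

End LA.
Arguments Sn {R n}.

Theorem mainTheorem6 (R : realType) (n : nat) (H : 'M[R[i]]_n)
  (L : nat) (e0 Delta : R) (a b : int) :
  H \is hermsymmx ->
  (forall z : R[i], eigenvalue H z -> (0 <= z <= (2 : R[i])^-1)) ->
  (4 <= L)%N ->
  1 / Num.sqrt (L%:R) < Delta ->
  let omega := Delta - 1 / Num.sqrt (L%:R) in
  omega < 1 ->
  0 <= e0 - Delta / 2 -> e0 + Delta / 2 <= 2^-1 ->
  (e0 - omega / 2) * L%:R = a%:~R ->
  (e0 + omega / 2) * L%:R = b%:~R ->
  opnorm (fcalc (Qfun L a b) H - specproj e0 Delta H *m fcalc (Qfun L a b) H)
    <= 2 / Num.sqrt (L%:R).
Proof.
move=> Hh Heig L4 hD omega hom hlo hhi ha hb.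
set c := 2 / Num.sqrt (L%:R).
have c0 : 0 <= c.
  by rewrite /c divr_ge0 // sqrtr_ge0.
have Hn := hermitian_normalmx Hh.
have HU := spectral_unitarymx H.
set U := spectralmx H.
set d := spectral_diag H.
pose ind := fun x : R => if (e0 - Delta / 2 <= x <= e0 + Delta / 2) then 1 else 0 : R.
pose g := fun x : R => Qfun L a b x - ind x * Qfun L a b x.
have Hg : forall j, `|g (complex.Re (d 0 j))| <= c.
  move=> j.
  have := Heig _ (@diag_eig R n H j Hn); rewrite -/d.
  have -> : (2 : R[i])^-1 = ((2 : R)^-1)%:C%C.
    by rewrite fmorphV /= rmorph_nat.
  rewrite !lecE /= => /andP[/andP[_ h0] /andP[_ h1]].
  rewrite /g /ind.
  case: ifP => hin.
    by rewrite mul1r subrr normr0.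
  rewrite mul0r subr0 ger0_norm; last first.
    by apply: sumr_ge0 => k _; apply: sqr_ge0.
  apply: (@Q_bound R L e0 Delta a b _ L4 hD hlo hhi ha hb); first by rewrite h0 h1.
  by rewrite hin.
set DG := diag_mx (map_mx (fun z : R[i] => (g (complex.Re z))%:C%C) d).
have HM : fcalc (Qfun L a b) H - specproj e0 Delta H *m fcalc (Qfun L a b) H
    = (U ^t* *m DG *m U)%sesqui.
  rewrite /specproj /fcalc -/U -/d invmx_unitary //.
  set DQ := diag_mx _.
  set DI := diag_mx _.
  rewrite !mulmxA (mulmxtVK _ HU).
  rewrite -mulmxBl -[(U ^t* *m DI *m DQ)%sesqui]mulmxA -mulmxBr.
  congr (_ *m _ *m _).
  apply/matrixP => i j.
  rewrite /DQ /DI /DG mul_diag_mx !mxE.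
  case: (i == j); rewrite ?mulr1n ?mulr0n ?mulr0 ?subr0 //.
  by rewrite /g rmorphB rmorphM.
have HUt : (U ^t* *m U = 1%:M)%sesqui.
  by have := HU; rewrite -trmxC_unitary => /unitarymxP; rewrite trmxCK.
have HUt2 : ((U ^t*) ^t* *m U ^t* = 1%:M)%sesqui.
  by rewrite trmxCK; apply/unitarymxP.
have bound : forall v : 'cV[R[i]]_n, vnorm v <= 1 ->
    vnorm ((U ^t* *m DG *m U)%sesqui *m v) <= c.
  move=> v hv.
  have -> : ((U ^t* *m DG *m U) *m v = U ^t* *m (DG *m (U *m v)))%sesqui.
    by rewrite !mulmxA.
  have hv' : Num.sqrt (Sn v) <= 1 := hv.
  have -> : vnorm ((U ^t* *m (DG *m (U *m v)))%sesqui) =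
    Num.sqrt (Sn ((U ^t* *m (DG *m (U *m v)))%sesqui)) by [].
  rewrite Sn_unitary //.
  have hS : Sn (DG *m (U *m v)) <= c ^+ 2 * Sn v.
    rewrite -(@Sn_unitary R n U v HUt) /Sn mulr_sumr; apply: ler_sum => i _.
    rewrite /DG mul_diag_mx !mxE Normc.normcM normc_real exprMn.
    apply: ler_wpM2r; first exact: sqr_ge0.
    by apply: lerXn2r; rewrite ?nnegrE ?normr_ge0 //; apply: Hg.
  apply: (le_trans (ler_wsqrtr hS)).
  rewrite sqrtrM ?sqr_ge0 // sqrtr_sqr ger0_norm //.
  rewrite -[X in _ <= X]mulr1; apply: ler_wpM2l => //.
rewrite HM /opnorm; apply: ge_sup.
  exists (vnorm ((U ^t* *m DG *m U)%sesqui *m 0)); exists 0 => //.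
  by change (Num.sqrt (Sn (0 : 'cV[R[i]]_n)) <= 1); rewrite Sn0 sqrtr0.
by move=> y [v hv <-]; apply: bound.
Qed.
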